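(* Let $T$ be a theory over a vocabulary $\Sigma$ and let $V$ be a fixed set of propagators for $T$. Then the length of every $V$-refinement sequence from a finite four-valued $\Sigma$-structure $\tilde I$ is bounded by a polynomial in $|\tilde I|$.
   Context: Vocabularies are finite sets of predicate symbols. Truth values $\mathbf{t},\mathbf{f},\mathbf{u},\mathbf{i}$ with precision order $\mathbf{u} \le_p \mathbf{t} \le_p \mathbf{i}$, $\mathbf{u} \le_p \mathbf{f} \le_p \mathbf{i}$ ($\mathbf{t},\mathbf{f}$ incomparable). A four-valued $\Sigma$-structure $\tilde I$ has domain $D$ and assigns to each $P/n\in\Sigma$ a function $P^{\tilde I}:D^n\to\{\mathbf{t},\mathbf{f},\mathbf{u},\mathbf{i}\}$; two-valued structures are identified with ordinary structures. $|\tilde I|$ is the cardinality of the domain. $\tilde I\le_p\tilde J$ iff pointwise $\le_p$; $<_p$ is the strict version. A propagator for $T$ is a map $O$ on four-valued $\Sigma$-structures with $\tilde I\le_p O(\tilde I)$ and $O(\tilde I)\le_p M$ for every two-valued model $M$ of $T$ with $\tilde I\le_p M$. For a set $V$ of propagators, a $V$-refinement sequence from $\tilde I$ is a (possibly transfinite) sequence $\langle \tilde J_\xi\rangle_{0\le\xi\le\alpha}$ with $\tilde J_0=\tilde I$, $\tilde J_{\xi+1}=O(\tilde J_\xi)$ for some $O\in V$, $\tilde J_\xi<_p\tilde J_{\xi+1}$ for all $\xi<\alpha$, and $\tilde J_\lambda$ the $\le_p$-least upper bound of $\{\tilde J_\xi\mid\xi<\lambda\}$ for limit ordinals $\lambda\le\alpha$.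 *)

(* Defs.v *)
From mathcomp Require Import all_boot.
From Stdlib Require Import List.

Set Implicit Arguments.
Unset Strict Implicit.
Unset Printing Implicit Defensive.

Record vocab := Vocab { sym : finType; ar : sym -> nat }.

(* ---------- First-order formulas over a vocabulary (de Bruijn variables) *)
Inductive form (S : vocab) : Type :=
| FAtom (P : sym S) (args : 'I_(ar P) -> nat)
| FEq (i j : nat)
| FNeg (f : form S)
| FAnd (f g : form S)
| FEx (f : form S).

Definition struct2 (S : vocab) (D : Type) := forall P : sym S, ('I_(ar P) -> D) -> bool.

Definition scons (D : Type) (d : D) (e : nat -> D) : nat -> D :=
  fun n => match n with 0 => d | S n' => e n' end.

Fixpoint sat (S : vocab) (D : Type) (M : struct2 S D) (e : nat -> D) (f : form S)
  : Prop :=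
  match f with
  | FAtom P args => M P (fun k => e (args k)) = true
  | FEq i j => e i = e j
  | FNeg g => ~ sat M e g
  | FAnd g h => sat M e g /\ sat M e h
  | FEx g => exists d : D, sat M (scons d e) g
  end.

Definition theory (S : vocab) := form S -> Prop.
Definition is_model (S : vocab) (T : theory S) (D : Type) (M : struct2 S D) : Prop :=
  forall f, T f -> forall e : nat -> D, sat M e f.

Inductive tv := tv_t | tv_f | tv_u | tv_i.

Definition tv_le (a b : tv) : bool :=
  match a, b with
  | tv_u, _ => true
  | _, tv_i => true
  | tv_t, tv_t => true
  | tv_f, tv_f => true
  | _, _ => false
  end.

Definition struct4 (S : vocab) (D : Type) := forall P : sym S, ('I_(ar P) -> D) -> tv.

Definition emb (S : vocab) (D : Type) (M : struct2 S D) : struct4 S D :=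
  fun P x => if M P x then tv_t else tv_f.

Definition le_p (S : vocab) (D : Type) (I J : struct4 S D) : Prop :=
  forall P x, tv_le (I P x) (J P x).

Definition eq_s (S : vocab) (D : Type) (I J : struct4 S D) : Prop :=
  forall P x, I P x = J P x.

Definition lt_p (S : vocab) (D : Type) (I J : struct4 S D) : Prop :=
  le_p I J /\ ~ eq_s I J.

Definition propagator_map (S : vocab) := forall D : Type, struct4 S D -> struct4 S D.

Definition is_propagator (S : vocab) (T : theory S) (O : propagator_map S) : Prop :=
  forall (D : Type) (I : struct4 S D),
    le_p I (O D I) /\
    (forall M : struct2 S D, is_model T M -> le_p I (emb M) -> le_p (O D I) (emb M)).

(* The index set {xi | 0 <= xi <= alpha} of a possibly transfinite sequence:
   a well-founded strict total order with a greatest element (alpha). *)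
Record wo_index := WOIndex {
  idx :> Type;
  ilt : idx -> idx -> Prop;
  ilt_irrefl : forall x, ~ ilt x x;
  ilt_trans : forall x y z, ilt x y -> ilt y z -> ilt x z;
  ilt_total : forall x y, ilt x y \/ x = y \/ ilt y x;
  ilt_wf : well_founded ilt;
  imax : idx;
  imax_max : forall x, x = imax \/ ilt x imax
}.

Definition is_bottom (W : wo_index) (b : W) : Prop := forall z, z = b \/ ilt b z.

Definition succ_of (W : wo_index) (x y : W) : Prop :=
  ilt x y /\ forall z, ilt x z -> z = y \/ ilt y z.

Definition is_limit (W : wo_index) (l : W) : Prop :=
  ~ is_bottom l /\ ~ (exists x, succ_of x l).

(* The length alpha (the order type of the indices below the maximum)
   is at most the natural number N. *)
Definition length_le (W : wo_index) (N : nat) : Prop :=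
  exists l : list W, (forall x : W, List.In x l) /\ (List.length l <= N.+1)%N.

Definition refinement_seq (S : vocab) (V : propagator_map S -> Prop)
  (D : Type) (I : struct4 S D) (W : wo_index) (J : W -> struct4 S D) : Prop :=
  (forall b, is_bottom b -> eq_s (J b) I) /\
  (forall x y, succ_of x y ->
     (exists O, V O /\ eq_s (J y) (O D (J x))) /\ lt_p (J x) (J y)) /\
  (forall l, is_limit l ->
     (forall x, ilt x l -> le_p (J x) (J l)) /\
     (forall K : struct4 S D, (forall x, ilt x l -> le_p (J x) K) -> le_p (J l) K)).

(* coefficient list [c0; c1; ...; ck] denotes c0 + c1 n + ... + ck n^k *)
Definition peval (cs : list nat) (n : nat) : nat :=
  List.fold_right (fun c acc => c + n * acc) 0 cs.

(* Main.v *)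
Require Import Defs.
From mathcomp Require Import all_boot.
From Stdlib Require Import Classical FunctionalExtensionality List Lia.
Set Implicit Arguments.
Unset Strict Implicit.

Definition tvr (a : tv) : nat :=
  match a with tv_u => 0 | tv_t => 1 | tv_f => 1 | tv_i => 2 end.

Lemma tvr_le a b : tv_le a b -> tvr a <= tvr b.
Proof. by case: a; case: b. Qed.

Lemma tvr_lt a b : tv_le a b -> a <> b -> tvr a < tvr b.
Proof. by case: a; case: b. Qed.

Lemma tvr_max a : tvr a <= 2.
Proof. by case: a. Qed.

Lemma tv_le_trans a b c : tv_le a b -> tv_le b c -> tv_le a c.
Proof. by case: a; case: b; case: c. Qed.

Definition rank (S : vocab) (D : finType) (I : struct4 S D) : nat :=
  \sum_(P : sym S) \sum_(f : {ffun 'I_(ar P) -> D}) tvr (I P f).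

Lemma sum_lt (I : finType) (F G : I -> nat) i :
  (forall j, F j <= G j) -> F i < G i -> \sum_j F j < \sum_j G j.
Proof.
move=> H Hi; rewrite (bigD1 i) //= [X in _ < X](bigD1 i) //=.
have : \sum_(j | j != i) F j <= \sum_(j | j != i) G j by apply: leq_sum.
move=> HS; rewrite -addSn; exact: leq_add.
Qed.

Lemma rank_le (S : vocab) (D : finType) (I J : struct4 S D) :
  le_p I J -> rank I <= rank J.
Proof.
move=> H; apply: leq_sum => P _; apply: leq_sum => f _; exact: tvr_le.
Qed.

Lemma rank_lt (S : vocab) (D : finType) (I J : struct4 S D) :
  lt_p I J -> rank I < rank J.
Proof.
move=> [H Hne].
have [P [x Hx]] : exists P x, I P x <> J P x.
  apply: NNPP => C; apply: Hne => P x; apply: NNPP => C'; apply: C; eauto.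
rewrite /rank; apply: (sum_lt (F := fun P => \sum_(f : {ffun 'I_(ar P) -> D}) tvr (I P f)) (G := fun P => \sum_(f : {ffun 'I_(ar P) -> D}) tvr (J P f)) (i := P)).
  move=> Q; apply: leq_sum => f _; exact: tvr_le.
apply: (sum_lt (F := fun f : {ffun 'I_(ar P) -> D} => tvr (I P f)) (G := fun f : {ffun 'I_(ar P) -> D} => tvr (J P f)) (i := finfun x)).
  move=> f; exact: tvr_le.
apply: tvr_lt; first exact: H.
rewrite (_ : (finfun x : 'I_(ar P) -> D) = x) //.
by apply: functional_extensionality => k; rewrite ffunE.
Qed.

Lemma rank_bound (S : vocab) (D : finType) (I : struct4 S D) :
  rank I <= \sum_(P : sym S) 2 * #|D| ^ ar P.
Proof.
apply: leq_sum => P _.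
apply: leq_trans (_ : \sum_(f : {ffun 'I_(ar P) -> D}) 2 <= _).
  apply: leq_sum => f _; exact: tvr_max.
by rewrite sum_nat_const card_ffun card_ord mulnC.
Qed.

Lemma wo_min (W : wo_index) (Q : W -> Prop) :
  (exists z, Q z) -> exists m, Q m /\ forall z, Q z -> ~ ilt z m.
Proof.
move=> [z Hz]; apply: NNPP => C.
have : forall y, ~ Q y.
  move=> y; induction (ilt_wf y) as [y _ IH] => Qy.
  apply: C; exists y; split => // w Qw Hw; exact: (IH w Hw Qw).
by move/(_ z).
Qed.

Lemma wo_succ (W : wo_index) (x y : W) : ilt x y ->
  exists s, succ_of x s /\ (s = y \/ ilt s y).
Proof.
move=> Hxy.
have [m [Hm Hmin]] := wo_min (Q := fun z => ilt x z) (ex_intro _ y Hxy).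
exists m; split.
  split => // z Hz.
  case: (ilt_total z m) => [H|[H|H]]; [by case: (Hmin z Hz H) | by left | by right].
case: (ilt_total m y) => [H|[H|H]]; [by right | by left | by case: (Hmin y Hxy H)].
Qed.

Lemma mono (S : vocab) (V : propagator_map S -> Prop) (D : Type)
  (I : struct4 S D) (W : wo_index) (J : W -> struct4 S D) :
  refinement_seq V I J -> forall y x, ilt x y -> le_p (J x) (J y).
Proof.
move=> [_ [Hs Hl]] y.
induction (ilt_wf y) as [y _ IH] => x Hxy.
case: (classic (exists x0, succ_of x0 y)) => [[x0 Hx0]|Hns].
  have [_ [Hle _]] := Hs _ _ Hx0.
  case: (ilt_total x x0) => [H|[H|H]].
  - move=> P z; apply: tv_le_trans (IH x0 (proj1 Hx0) x H P z) (Hle P z).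
  - by rewrite H.
  - case: (proj2 Hx0 x H) => E.
      by rewrite E in Hxy; case: (ilt_irrefl Hxy).
    by case: (ilt_irrefl (ilt_trans E Hxy)).
case: (classic (is_bottom y)) => [Hb|Hnb].
  by case: (Hb x) => [E|E]; [rewrite E in Hxy; case: (ilt_irrefl Hxy)|case: (ilt_irrefl (ilt_trans E Hxy))].
exact: (proj1 (Hl y (conj Hnb Hns)) x Hxy).
Qed.

Lemma rank_strict (S : vocab) (V : propagator_map S -> Prop) (D : finType)
  (I : struct4 S D) (W : wo_index) (J : W -> struct4 S D) :
  refinement_seq V I J -> forall x y, ilt x y -> rank (J x) < rank (J y).
Proof.
move=> HR x y Hxy.
have [s [Hs Hsy]] := wo_succ Hxy.
have Hlt := rank_lt (proj2 ((proj1 (proj2 HR)) _ _ Hs)).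
case: Hsy => [<-|H] //.
exact: leq_trans Hlt (rank_le (mono HR H)).
Qed.

Lemma count_lemma (S : vocab) (V : propagator_map S -> Prop) (D : finType)
  (I : struct4 S D) (W : wo_index) (J : W -> struct4 S D) :
  refinement_seq V I J -> forall k, exists l : list W,
    (forall x, rank (J x) < k -> In x l) /\ (length l <= k)%N.
Proof.
move=> HR; elim=> [|k [l [Hl Hlen]]].
  by exists nil.
case: (classic (exists x, rank (J x) = k)) => [[x Hx]|Hn].
  exists (x :: l); split; last by [].
  move=> z; rewrite ltnS leq_eqVlt => /orP [/eqP Hz|Hz]; last by right; apply: Hl.
  left; case: (ilt_total x z) => [H|[H|H]] //.
    by have := rank_strict HR H; rewrite Hx Hz ltnn.
  by have := rank_strict HR H; rewrite Hx Hz ltnn.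
exists l; split; last by apply: leq_trans Hlen _.
move=> z; rewrite ltnS leq_eqVlt => /orP [/eqP Hz|Hz]; last by apply: Hl.
by case: Hn; exists z.
Qed.

Lemma peval_nseq k c n : peval (nseq k c) n = c * \sum_(d < k) n ^ d.
Proof.
elim: k => [|k IH]; first by rewrite big_ord0 muln0.
rewrite /= -/(peval (nseq k c) n) IH big_ord_recl /= expn0.
have -> : \sum_(i < k) n ^ bump 0 i = n * \sum_(i < k) n ^ i.
  by rewrite big_distrr; apply: eq_bigr => i _; rewrite /bump /= add1n expnS.
by rewrite mulnDr muln1 mulnCA.
Qed.

Lemma pow_le_sum n a m : a <= m -> n ^ a <= \sum_(d < m.+1) n ^ d.
Proof.
move=> Ham; have Ha : a < m.+1 by [].
by rewrite (bigD1 (Ordinal Ha)) //= leq_addr.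
Qed.

Theorem proposition3p5 :
  forall (S : vocab) (T : theory S) (V : propagator_map S -> Prop),
    (forall O, V O -> is_propagator T O) ->
    exists cs : list nat,
      forall (D : finType) (I : struct4 S D) (W : wo_index) (J : W -> struct4 S D),
        refinement_seq V I J -> length_le W (peval cs #|D|).
Proof.
move=> S T V _.
set m := \max_(P : sym S) ar P.
exists (nseq m.+1 (#|sym S| * 2)) => D I W J HR.
set K := peval _ _.
have HK : forall x, rank (J x) <= K.
  move=> x; apply: leq_trans (rank_bound (J x)) _.
  rewrite /K peval_nseq -mulnA -sum_nat_const.
  apply: leq_sum => P _; rewrite leq_mul2l /=.
  apply: pow_le_sum; exact: leq_bigmax.
have [l [Hl Hlen]] := count_lemma HR K.+1.
exists l; split => // x; apply: Hl; rewrite ltnS; exact: HK.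
Qed.
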